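(* Let $s$ be a positive integer, let $0<\varepsilon<1$, and let $A,B\subseteq[s]$. Put $\alpha=|B|/s$. Then there exist at least \[ \frac{\varepsilon}{1-(1-\varepsilon)\alpha}\,\alpha s \] elements $x\in[s]$ such that $|(A+x)\cap B|\ge(1-\varepsilon)\alpha|A|$.
   Context: $[s]=\{1,\dots,s\}$. For $A\subseteq[s]$ and an integer $x$, $A+x$ denotes the cyclic shift of $A$ within $[s]$ by $x$, i.e. $A+x=\{((a-1+x)\bmod s)+1 : a\in A\}$. *)

(* Defs.v *)
From mathcomp Require Import all_boot all_order all_algebra.
Set Implicit Arguments. Unset Strict Implicit. Unset Printing Implicit Defensive.

(* [s] = {1,...,s} is represented by 'I_s, the element i : 'I_s standing
   for i+1.  Under this encoding the cyclic shift
   A + x = {((a-1+x) mod s)+1 : a in A} becomes {(i + x) mod s : i in A}. *)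
Definition cshift (s : nat) (A : {set 'I_s}) (x : nat) : {set 'I_s} :=
  [set j : 'I_s | [exists i in A, nat_of_ord j == (nat_of_ord i + x) %% s]].

Definition interval1 (s : nat) : seq nat := iota 1 s.

(* Main.v *)
Require Import Defs.
From mathcomp Require Import all_boot all_order all_algebra.
From mathcomp Require Import ring lra.
Import Order.TTheory GRing.Theory Num.Theory.

Definition fsh (s : nat) (hs : (0 < s)%N) (x : nat) (i : 'I_s) : 'I_s :=
  Ordinal (ltn_pmod (i + x) hs).

Lemma fsh_inj s hs x : injective (@fsh s hs x).
Proof.
move=> i j /(congr1 val) /= /eqP; rewrite eqn_modDr !modn_small //= => /eqP.
exact: val_inj.
Qed.

Lemma cshiftE s hs A x : cshift A x = @fsh s hs x @: A.
Proof.
apply/setP=> j; rewrite inE; apply/existsP/imsetP.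
  by case=> i /andP[iA /eqP e]; exists i => //; apply: val_inj.
by case=> i iA ->; exists i; rewrite iA /=.
Qed.

Lemma card_cshiftI s hs (A B : {set 'I_s}) x :
  #|cshift A x :&: B| = (\sum_(i in A) (@fsh s hs x i \in B))%N.
Proof.
rewrite (@cshiftE s hs) -sum1_card.
rewrite (eq_bigl (fun j => (j \in @fsh s hs x @: A) && (j \in B))); last by move=> j; rewrite inE.
rewrite big_mkcondr /= big_imset /=; last by move=> i j _ _; apply: fsh_inj.
by apply: eq_bigr => i _; case: (_ \in B).
Qed.

Lemma sum_cshift s (hs : (0 < s)%N) (A B : {set 'I_s}) :
  (\sum_(x <- interval1 s) #|cshift A x :&: B|)%N = (#|A| * #|B|)%N.
Proof.
rewrite /interval1 -(addn0 1) iotaDl big_map -val_enum_ord big_map.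
rewrite big_enum /=.
under eq_bigr => x _ do rewrite (@card_cshiftI s hs).
rewrite exchange_big /= -sum1_card big_distrl /=.
apply: eq_bigr => i _; rewrite mul1n.
rewrite -sum1_card big_mkcond /=.
have inj : injective (fun x : 'I_s => @fsh s hs (1 + x)%N i).
  move=> a b /(congr1 val) /= /eqP; rewrite addnA addnA eqn_modDl !modn_small //= => /eqP.
  exact: val_inj.
rewrite [RHS](reindex_inj inj) /=.
rewrite [RHS]big_mkcond; apply: eq_bigr => x _ /=; by case: (_ \in B).
Qed.

Local Open Scope ring_scope.

Theorem proposition1 (s : nat) (hs : (0 < s)%N) (R : realFieldType) (eps : R)
    (heps0 : 0 < eps) (heps1 : eps < 1) (A B : {set 'I_s}) :
  let alpha : R := #|B|%:R / s%:R in
  eps / (1 - (1 - eps) * alpha) * alpha * s%:R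
    <= (count (fun x : nat =>
              (1 - eps) * alpha * #|A|%:R <= #|cshift A x :&: B|%:R)
             (interval1 s))%:R.
Proof.
cbv zeta. set alpha := (#|B|%:R / s%:R : R).
set P := (fun x : nat => _).
set N := count P _.
have s0 : 0 < s%:R :> R by rewrite ltr0n.
have hb : #|B|%:R = alpha * s%:R by rewrite /alpha mulfVK // gt_eqF.
have al0 : 0 <= alpha by rewrite /alpha divr_ge0 // ler0n.
have al1 : alpha <= 1.
  rewrite /alpha ler_pdivrMr // mul1r ler_nat.
  by rewrite -[X in (_ <= X)%N]card_ord max_card.
have Dpos : 0 < 1 - (1 - eps) * alpha.
  rewrite subr_gt0; apply: (le_lt_trans (y := (1 - eps) * 1)).
    by rewrite ler_pM2l // subr_gt0.
  by rewrite mulr1 ltrBlDr ltrDl.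
have -> : eps / (1 - (1 - eps) * alpha) * alpha * s%:R
          = (eps * alpha * s%:R) / (1 - (1 - eps) * alpha) by ring.
rewrite ler_pdivrMr //.
have Ns : (N <= s)%N by rewrite /N -[X in (_ <= X)%N](size_iota 1 s) count_size.
have cnt_le x : (#|cshift A x :&: B| <= #|A|)%N.
  rewrite (leq_trans (subset_leq_card (subsetIl _ _))) //.
  by rewrite (@cshiftE s hs) card_imset //; apply: fsh_inj.
have [a0|apos] := eqVneq #|A| 0%N.
  have -> : N = s.
    rewrite /N (eq_count (a2 := predT)) ?count_predT ?size_iota //.
    move=> x; rewrite /P /= a0 mulr0 ler0n //.
  nra.
have hsum := @sum_cshift s hs A B.
have := congr1 (fun n : nat => n%:R : R) hsum; rewrite /= natr_sum.
rewrite (bigID P) /=.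
set c := (1 - eps) * alpha * #|A|%:R.
have h1 : \sum_(i <- interval1 s | P i) (#|cshift A i :&: B|%:R : R)
          <= #|A|%:R *+ N.
  rewrite /N -iter_addr_0 -big_const_seq.
  by apply: ler_sum => x _; rewrite ler_nat.
have h2 : \sum_(i <- interval1 s | ~~ P i) (#|cshift A i :&: B|%:R : R)
          <= c *+ (s - N)%N.
  have -> : (s - N)%N = count (predC P) (interval1 s).
    by rewrite /N -[X in (X - _)%N](size_iota 1 s) -(count_predC P (interval1 s)) addKn.
  rewrite -iter_addr_0 -big_const_seq.
  by apply: ler_sum => x; rewrite /P /= -ltNge => /ltW.
move=> E.
have key : (#|A| * #|B|)%:R <= #|A|%:R *+ N + c *+ (s - N)%N.
  by rewrite -E; apply: lerD.
move: key; rewrite natrM hb -[_ *+ N]mulr_natr -[_ *+ (s - N)%N]mulr_natr natrB // /c => key.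
have a0' : 0 < #|A|%:R :> R by rewrite ltr0n lt0n.
have st : 0 <= N%:R + (s%:R - N%:R) * (1 - eps) * alpha - alpha * s%:R.
  rewrite -(pmulr_rge0 _ a0'). lra.
nra.
Qed.
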